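(* Let $\mathbf{A}\in\mathbb{R}^{(\ell m)\times(qn)}$ be a block matrix with $\ell\times q$ blocks of size $m\times n$, and let $\mathbf{B}=\mathbf{S}_{\ell,m}\mathbf{A}\mathbf{S}_{q,n}^\top$, viewed as an $m\times n$ grid of blocks of size $\ell\times q$. Let $\mathscr{A}\subseteq\mathbb{R}^{m\times n}$ be the span of the blocks of $\mathbf{A}$ and $\mathscr{B}\subseteq\mathbb{R}^{\ell\times q}$ the span of the blocks of $\mathbf{B}$. Then $\dim(\mathscr{A})=\dim(\mathscr{B})$.
   Context: Blocks of $\mathbf{A}$: $\mathbf{A}^{(\gamma,\delta)}_{\alpha\beta}=\mathbf{A}_{(\gamma-1)m+\alpha,(\delta-1)n+\beta}$ for $(\gamma,\delta)\in[\ell]\times[q]$, $(\alpha,\beta)\in[m]\times[n]$. Blocks of $\mathbf{B}$: $\mathbf{B}^{(\alpha,\beta)}_{\gamma\delta}=\mathbf{B}_{(\alpha-1)\ell+\gamma,(\beta-1)q+\delta}$. For $a,b\ge 1$ and $s=ab$, the shuffle permutation matrix $\mathbf{S}_{a,b}\in\mathbb{R}^{s\times s}$ has row $(i-1)a+j$ equal to $\mathbf{e}_{(j-1)b+i}^\top$ for $i\in[b]$, $j\in[a]$ (the rows of $\mathbf{I}_s$ with indices $i,i+b,\dots,i+(a-1)b$, stacked for $i=1,\dots,b$). In the paper's terminology, $\mathscr{A}$ (spanned by the distinct blocks of $\mathbf{A}$) is the inner blockspan and $\mathscr{B}$ (spanned by the distinct blocks of $\mathbf{B}$) is the outer blockspan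 of $\mathbf{A}$. *)

(* Defs.v *)
From HB Require Import structures.
From mathcomp Require Import all_boot all_order all_algebra.
From mathcomp Require Import Rstruct.
From Stdlib Require Rdefinitions.
Notation R := Rdefinitions.R.
Set Implicit Arguments. Unset Strict Implicit. Unset Printing Implicit Defensive.
Import GRing.Theory.
Local Open Scope ring_scope.

(* Shuffle permutation matrix S_{a,b} (0-indexed): row i*a+j (i<b, j<a)
   is e_{j*b+i}^T.  For r = i*a + j we have j = r %% a and i = r %/ a. *)
Definition shuffle_mx (a b : nat) : 'M[R]_(a * b) :=
  \matrix_(r < a * b, c < a * b) ((nat_of_ord c == (r %% a) * b + r %/ a)%N)%:R.

Lemma blk_idx_lt (p r : nat) (i : 'I_p) (x : 'I_r) : (i * r + x < p * r)%N.
Proof.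
have Hi := ltn_ord i; have Hx := ltn_ord x.
apply: (@leq_trans (i * r + r)); first by rewrite ltn_add2l.
by rewrite addnC -mulSn leq_mul2r Hi orbT.
Qed.

Lemma blk_idx_lt' (p r : nat) (i : 'I_p) (x : 'I_r) : (i * r + x < r * p)%N.
Proof. by rewrite [(r * p)%N]mulnC blk_idx_lt. Qed.

Definition blockA (l m q n : nat) (M : 'M[R]_(l * m, q * n)) (g : 'I_l) (d : 'I_q)
  : 'M[R]_(m, n) :=
  \matrix_(a < m, b < n) M (Ordinal (blk_idx_lt g a)) (Ordinal (blk_idx_lt d b)).

Definition blockB (l m q n : nat) (M : 'M[R]_(l * m, q * n)) (a : 'I_m) (b : 'I_n)
  : 'M[R]_(l, q) :=
  \matrix_(g < l, d < q) M (Ordinal (blk_idx_lt' a g)) (Ordinal (blk_idx_lt' b d)).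

Definition inner_blockspan (l m q n : nat) (M : 'M[R]_(l * m, q * n))
  : {vspace 'M[R]_(m, n)} :=
  <<[seq blockA M g d | g <- enum 'I_l, d <- enum 'I_q]>>%VS.

Definition outer_blockspan (l m q n : nat) (M : 'M[R]_(l * m, q * n))
  : {vspace 'M[R]_(l, q)} :=
  <<[seq blockB M a b | a <- enum 'I_m, b <- enum 'I_n]>>%VS.

(* Main.v *)
Require Import Defs.
From HB Require Import structures.
From mathcomp Require Import all_boot all_order all_algebra.
From mathcomp Require Import Rstruct zify.
Set Implicit Arguments. Unset Strict Implicit. Unset Printing Implicit Defensive.
Import GRing.Theory.
Import VectorInternalTheory.
Local Open Scope ring_scope.

Lemma shuf_lt (a b : nat) (r : 'I_(a * b)) : (r %% a * b + r %/ a < a * b)%N.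
Proof.
case: r => r Hr /=.
have Ha : (0 < a)%N by case: a Hr => //=; rewrite mul0n.
have H1 : (r %/ a < b)%N by rewrite ltn_divLR // mulnC.
have H2 : (r %% a < a)%N by rewrite ltn_mod.
nia.
Qed.

Lemma shuffle_mulE (a b k : nat) (M : 'M[R]_(a * b, k)) r c :
  (shuffle_mx a b *m M) r c = M (Ordinal (shuf_lt r)) c.
Proof.
rewrite mxE (bigD1 (Ordinal (shuf_lt r))) //= big1 ?addr0.
  by rewrite mxE eqxx mul1r.
move=> i Hi; rewrite mxE; case: eqP => [E|]; last by rewrite mul0r.
by case/eqP: Hi; apply: val_inj; rewrite /= E.
Qed.

Lemma lin_rank k1 k2 N (F : 'rV[R]_k1 -> 'rV[R]_k2) (HF : linear F) (M : 'M[R]_(N, k1)) :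
  (\rank (\matrix_i F (row i M)) <= \rank M)%N.
Proof.
pose LF : {linear 'rV[R]_k1 -> 'rV[R]_k2} := HB.pack F (GRing.isLinear.Build _ _ _ _ F HF).
have -> : \matrix_i F (row i M) = M *m lin1_mx LF.
  by apply/row_matrixP => i; rewrite rowK row_mul mul_rV_lin1.
exact: mxrankM_maxl.
Qed.
Lemma span_rank (K : fieldType) (vT : vectType K) (X : seq vT) (I : finType) (f : I -> vT)
  (H1 : forall x, x \in X -> exists i, x = f i) (H2 : forall i, f i \in X) :
  \dim <<X>>%VS = \rank (\matrix_(j < #|I|) v2r (f (enum_val j))).
Proof.
rewrite unlock /span_expanded_def /dimv (mx2vsK _).
apply/eqmx_rank/andP; split; last first.
- apply/row_subP => j; rewrite rowK.
  have Hx := H2 (enum_val j).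
  have Hi : (index (f (enum_val j)) X < size X)%N by rewrite index_mem.
  have := row_sub (Ordinal Hi) (b2mx (in_tuple X)).
  by rewrite /b2mx rowK (tnth_nth (f (enum_val j))) /= nth_index.
- apply/row_subP => i; rewrite /b2mx rowK.
  have Hx : tnth (in_tuple X) i \in X by rewrite mem_tnth.
  have [k ->] := H1 _ Hx.
  have := row_sub (enum_rank k) (\matrix_(j < #|I|) v2r (f (enum_val j))).
  by rewrite rowK enum_rankK.
Qed.

Section Iso.
Variables (m n N : nat) (x : 'I_N -> 'M[R]_(m, n)).
Let J := ('I_m * 'I_n)%type.
Definition psi (Y : 'M[R]_(m, n)) : 'rV[R]_#|{: J}| :=
  \row_k Y (enum_val k).1 (enum_val k).2.
Definition psiinv (r : 'rV[R]_#|{: J}|) : 'M[R]_(m, n) :=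
  \matrix_(a, b) r ord0 (enum_rank ((a, b) : J)).

Lemma psiK : cancel psi psiinv.
Proof. by move=> Y; apply/matrixP => a b; rewrite !mxE enum_rankK. Qed.

Lemma psiinvK : cancel psiinv psi.
Proof.
move=> r; apply/rowP => k; rewrite !mxE -surjective_pairing enum_valK.
by [].
Qed.

Lemma rank_psi :
  \rank (\matrix_j v2r (x j)) = \rank (\matrix_j psi (x j)).
Proof.
apply/eqP; rewrite eqn_leq; apply/andP; split.
- have L : linear (fun r => v2r (psiinv r)).
    move=> a u v /=; rewrite -linearP; congr v2r.
    by apply/matrixP => i j; rewrite !mxE.
  have := lin_rank L (\matrix_j psi (x j)).
  congr (_ <= _)%N; congr mxrank; apply/row_matrixP => j.
  by rewrite !rowK psiK.
- have L : linear (fun r => psi (r2v r)).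
    move=> a u v /=; rewrite linearP.
    by apply/rowP => i; rewrite !mxE.
  have := lin_rank L (\matrix_j v2r (x j)).
  congr (_ <= _)%N; congr mxrank; apply/row_matrixP => j.
  by rewrite !rowK v2rK.
Qed.
End Iso.

Lemma shuf_val (l m : nat) (a : 'I_m) (g : 'I_l) :
  ((a * l + g) %% l * m + (a * l + g) %/ l = g * m + a)%N.
Proof.
have Hl : (0 < l)%N by case: g => g' /=; case: l => // g' _.
by rewrite modnMDl modn_small // divnMDl // divn_small // addn0.
Qed.

Lemma B_entry l m q n (A : 'M[R]_(l * m, q * n)) g d a b :
  (shuffle_mx l m *m A *m (shuffle_mx q n)^T)
     (Ordinal (blk_idx_lt' a g)) (Ordinal (blk_idx_lt' b d))
  = A (Ordinal (blk_idx_lt g a)) (Ordinal (blk_idx_lt d b)).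
Proof.
rewrite -[shuffle_mx l m *m A *m _]trmxK trmx_mul trmxK mxE shuffle_mulE mxE shuffle_mulE.
by congr (A _ _); apply: val_inj; rewrite /= shuf_val.
Qed.

Theorem theorem2 (l m q n : nat) (Hl : (0 < l)%N) (Hm : (0 < m)%N)
  (Hq : (0 < q)%N) (Hn : (0 < n)%N) (A : 'M[R]_(l * m, q * n)) :
  let B := shuffle_mx l m *m A *m (shuffle_mx q n)^T in
  \dim (inner_blockspan A) = \dim (outer_blockspan B).
Proof.
move=> B.
rewrite /inner_blockspan /outer_blockspan.
rewrite (@span_rank _ _ _ ('I_l * 'I_q)%type (fun p => blockA A p.1 p.2)).
- rewrite (@span_rank _ _ _ ('I_m * 'I_n)%type (fun p => blockB B p.1 p.2)).
  + rewrite !rank_psi -mxrank_tr; congr mxrank.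
    apply/matrixP => j k.
    have E := B_entry A (enum_val k).1 (enum_val k).2 (enum_val j).1 (enum_val j).2.
    rewrite -/B in E; clearbody B.
    by rewrite !mxE E.
  + by move=> x /allpairsP [[a b] [_ _ ->]]; exists (a, b).
  + by case=> a b; apply/allpairsP; exists (a, b); rewrite !mem_enum.
- by move=> x /allpairsP [[a b] [_ _ ->]]; exists (a, b).
- by case=> a b; apply/allpairsP; exists (a, b); rewrite !mem_enum.
Qed.
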